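(* Let $G$ be a graph and $S,T\subseteq V(G)$. Let $X=\partial(S)\cup(T\cap S)$ and let $H$ be a graph with $X\subseteq V(H)$ and $V(H)\cap(V(G)\setminus S)=\emptyset$ such that $B_H(X)=B_{G[S]}(X)$. Let $G'$ be the graph obtained from $G$ by replacing $G[S]$ with $H$ (that is, $V(G')=(V(G)\setminus S)\cup V(H)$ and $E(G')$ consists of the edges of $G$ not having both endpoints in $S$ together with $E(H)$). Then $B_G(T)=B_{G'}(T)$.
   Context: $\partial(S)$ is the set of vertices of $S$ having at least one neighbor in $V(G)\setminus S$. For a graph $Y$ and $Z\subseteq V(Y)$, $B_Y(Z)$ is the set of subsets $Z'\subseteq Z$ such that there is a bipartition of $Y$ (proper $2$-coloring) with all of $Z'$ in one part and all of $Z\setminus Z'$ in the other; $B_Y(Z)=\emptyset$ if $Y$ is not bipartite. *)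

(* Defs.v *)
From mathcomp Require Import all_boot.
Set Implicit Arguments. Unset Strict Implicit. Unset Printing Implicit Defensive.

(* A finite simple graph on an ambient finite type T is given by its vertex
   set V : {set T} and an adjacency relation e : rel T which is symmetric,
   irreflexive and only relates vertices of V. *)
Definition is_graph (T : finType) (V : {set T}) (e : rel T) : Prop :=
  symmetric e /\ irreflexive e /\ (forall x y, e x y -> (x \in V) && (y \in V)).

Definition induced_adj (T : finType) (e : rel T) (S : {set T}) : rel T :=
  [rel x y | [&& e x y, x \in S & y \in S]].

Definition boundary (T : finType) (V : {set T}) (e : rel T) (S : {set T}) : {set T} :=
  [set x in S | [exists y in V :\: S, e x y]].

Definition proper2 (T : finType) (V : {set T}) (e : rel T) (c : {ffun T -> bool}) : bool :=
  [forall x in V, forall y in V, e x y ==> (c x != c y)].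

(* B_Y(Z): subsets Z' of Z such that some bipartition of Y puts Z' in one
   part and Z \ Z' in the other.  (Empty when Y is not bipartite.) *)
Definition Bsets (T : finType) (V : {set T}) (e : rel T) (Z : {set T}) : {set {set T}} :=
  [set Z' : {set T} | (Z' \subset Z) &&
     [exists c : {ffun T -> bool}, proper2 V e c && [forall z in Z, c z == (z \in Z')]]].

Definition replace_verts (T : finType) (V S VH : {set T}) : {set T} := (V :\: S) :|: VH.
Definition replace_adj (T : finType) (e : rel T) (S : {set T}) (eH : rel T) : rel T :=
  [rel x y | (e x y && ~~ ((x \in S) && (y \in S))) || eH x y].

(* Main.v *)
Require Import Defs.
From mathcomp Require Import all_boot.

Lemma proper2P (T0 : finType) (V : {set T0}) (e : rel T0) (c : {ffun T0 -> bool}) :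
  reflect (forall x y, x \in V -> y \in V -> e x y -> c x != c y) (proper2 V e c).
Proof.
apply: (iffP forallP) => [H x y xV yV exy | H x].
  by move/implyP: (H x) => /(_ xV) /forallP /(_ y) /implyP /(_ yV) /implyP; apply.
by apply/implyP => xV; apply/forallP => y; apply/implyP => yV; apply/implyP; apply: H.
Qed.

Lemma colP (T0 : finType) (Z Z' : {set T0}) (c : {ffun T0 -> bool}) :
  reflect (forall z, z \in Z -> c z = (z \in Z')) [forall z in Z, c z == (z \in Z')].
Proof.
apply: (iffP forallP) => [H z zZ | H z].
  by move/implyP: (H z) => /(_ zZ) /eqP.
by apply/implyP => zZ; rewrite H.
Qed.

Theorem lemma5p6 (T0 : finType) (V : {set T0}) (e : rel T0)
  (VH : {set T0}) (eH : rel T0) (S T : {set T0}) :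
  is_graph V e -> is_graph VH eH ->
  S \subset V -> T \subset V ->
  boundary V e S :|: (T :&: S) \subset VH ->
  VH :&: (V :\: S) = set0 ->
  Bsets VH eH (boundary V e S :|: (T :&: S)) =
    Bsets S (induced_adj e S) (boundary V e S :|: (T :&: S)) ->
  Bsets V e T = Bsets (replace_verts V S VH) (replace_adj e S eH) T.
Proof.
move=> [esym [_ eV]] [_ [_ eHV]] SV TV XH disj HB.
set X := boundary V e S :|: (T :&: S) in XH HB *.
have bdX : forall x y, x \in S -> y \in V -> y \notin S -> e x y -> x \in X.
  move=> x y xS yV yS exy; rewrite !inE; apply/orP; left.
  rewrite xS /=; apply/existsP; exists y; by rewrite !inE yS yV exy.
have TX : forall z, z \in T -> z \in S -> z \in X.
  by move=> z zT zS; rewrite !inE zT zS orbT.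
have HnVS : forall x, x \in VH -> (x \in V :\: S) = false.
  move=> x xH; apply/negbTE/negP => xVS.
  have : x \in VH :&: (V :\: S) by rewrite inE xH xVS.
  by rewrite disj inE.
apply/setP => Z'; rewrite !inE; apply/andb_id2l => sub.
apply/existsP/existsP.
- case=> c /andP[/proper2P pc /colP cT].
  have : [set x in X | c x] \in Bsets S (induced_adj e S) X.
    rewrite inE; apply/andP; split.
      by apply/subsetP => x; rewrite inE => /andP[].
    apply/existsP; exists c; apply/andP; split.
      apply/proper2P => x y xS yS /= /and3P[exy _ _].
      by apply: pc => //; apply: (subsetP SV).
    by apply/colP => z zX; rewrite in_set zX.
  rewrite -HB inE => /andP[_ /existsP[cH /andP[/proper2P pH /colP cHX]]].
  have cHc : forall x, x \in X -> cH x = c x by move=> x xX; rewrite (cHX x xX) in_set xX.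
  exists [ffun x => if x \in V :\: S then c x else cH x].
  apply/andP; split.
    apply/proper2P => x y; rewrite /replace_verts !ffunE /= => xV' yV' /orP[/andP[exy nS]|eHxy].
      have /andP[xV yV] := eV _ _ exy.
      case xS: (x \in S); case yS: (y \in S); rewrite ?inE ?xS ?yS ?xV ?yV //=.
      + by rewrite xS yS in nS.
      + have xX : x \in X by apply: (bdX x y) => //; rewrite yS.
        by rewrite cHc //; apply: pc.
      + have yX : y \in X by apply: (bdX y x) => //; [rewrite xS | rewrite esym].
        by rewrite cHc //; apply: pc.
      + by apply: pc.
    have /andP[xH yH] := eHV _ _ eHxy.
    by rewrite !HnVS //; apply: pH.
  apply/colP => z zT; rewrite ffunE.
  case: ifP => zVS; first by rewrite cT.
  have zS : z \in S by move: zVS; rewrite inE (subsetP TV _ zT) andbT => /negbFE.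
  by rewrite cHc ?cT // TX.
- case=> c /andP[/proper2P pc /colP cT].
  have : [set x in X | c x] \in Bsets VH eH X.
    rewrite inE; apply/andP; split.
      by apply/subsetP => x; rewrite inE => /andP[].
    apply/existsP; exists c; apply/andP; split.
      apply/proper2P => x y xH yH exy; apply: pc.
      + by rewrite /replace_verts inE xH orbT.
      + by rewrite /replace_verts inE yH orbT.
      + by rewrite /replace_adj /induced_adj /= exy orbT.
    by apply/colP => z zX; rewrite in_set zX.
  rewrite HB inE => /andP[_ /existsP[cS /andP[/proper2P pS /colP cSX]]].
  have cSc : forall x, x \in X -> cS x = c x by move=> x xX; rewrite (cSX x xX) in_set xX.
  exists [ffun x => if x \in S then cS x else c x].
  apply/andP; split.
    apply/proper2P => x y xV yV exy; rewrite !ffunE.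
    have V'1 : forall z, z \in V -> z \notin S -> z \in replace_verts V S VH.
      by move=> z zV zS; rewrite /replace_verts !inE zV zS.
    have V'2 : forall z, z \in X -> z \in replace_verts V S VH.
      by move=> z zX; rewrite /replace_verts inE (subsetP XH _ zX) orbT.
    case xS: (x \in S); case yS: (y \in S).
    + by apply: pS => //; rewrite /induced_adj /= exy xS yS.
    + have xX : x \in X by apply: (bdX x y) => //; rewrite yS.
      rewrite cSc //; apply: pc; [exact: V'2 | by apply: V'1 => //; rewrite yS|].
      by rewrite /replace_adj /induced_adj /= exy xS yS.
    + have yX : y \in X by apply: (bdX y x) => //; [rewrite xS | rewrite esym].
      rewrite cSc //; apply: pc; [by apply: V'1 => //; rewrite xS | exact: V'2 |].
      by rewrite /replace_adj /induced_adj /= exy xS yS.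
    + apply: pc; [by apply: V'1 => //; rewrite xS | by apply: V'1 => //; rewrite yS |].
      by rewrite /replace_adj /induced_adj /= exy xS.
  apply/colP => z zT; rewrite ffunE.
  case: ifP => zS; last by rewrite cT.
  by rewrite cSc ?cT // TX.
Qed.
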